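(* Let $(\Psi_d)_d$ be a constraint structure that is both a meet and a lift constraint structure, let $(\le,\wedge,P)$ be a decent triple on it, and let $(R^d)_d$ be a constraint-refining predicate that relates to a constraint-producing predicate $(\models^d)_d$. If $\vdash^{d}\Gamma\to\sigma'$ is derivable in DI, then for every $\sigma\in\Psi_d$ such that $P(\sigma\wedge\sigma')$, there exists $\sigma''\in\Psi_d$ such that $\sigma''\simeq\sigma\wedge\sigma'$ and $\sigma\to\vdash^{d}\Gamma\to\sigma''$ is derivable in SDI.
   Context: Formulas are first-order formulas in negation normal form, built from literals using $\wedge,\vee,\forall,\exists$. Eigenvariables (written $\bar x$) and meta-variables (written $X$) are two disjoint infinite supplies of variables. Domains: there is an initial domain $d_0$; for a domain $d$ and an eigenvariable $\bar x$ (resp. meta-variable $X$) not declared in $d$, $d;\bar x$ (resp. $d;X$) is a domain declaring additionally $\bar x$ (resp. $X$); all domains arise this way. A formula of domain $d$ is one whose free variables are eigenvariables or meta-variables declared in $d$; a context of domain $d$ is a finite multiset of formulas of domain $d$; $\Gamma_{lit}$ is the set of literals that are elements of $\Gamma$. A constraint structure consists of a set $\Psi_d$ for each domain $d$, with $\Psi_{d;\bar x}=\Psi_d$, and projection maps $\Psi_{d;X}\to\Psi_d$, $\sigma\mapsto\sigma_\downarrow$; a meet constraint structure additionally has a binary operation $\wedge$ on each $\Psi_d$; a lift constraint structure additionally has maps $\Psi_d\to\Psi_{d;X}$, $\sigma\mapsto\sigma^\uparrow$. A triple $(\le,\wedge,P)$, where $\le$ is a family of preorders on the $\Psi_d$,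 $\wedge$ the meet operations, and $P$ a family of predicates on the $\Psi_d$, is decent if, writing $\simeq$ for the equivalence relation generated by $\le$: (D1) for all $\sigma,\sigma'\in\Psi_d$, $\sigma\wedge\sigma'$ is a greatest lower bound of $\sigma,\sigma'$ for $\le$; (D2) for all $\sigma\in\Psi_d$ and $\sigma',\sigma''\in\Psi_{d;X}$, $\sigma''\simeq\sigma^\uparrow\wedge\sigma'$ implies $\sigma''_\downarrow\simeq\sigma\wedge\sigma'_\downarrow$; (P1) for all $\sigma\in\Psi_{d;X}$, $P(\sigma)\iff P(\sigma_\downarrow)$; (P2) for all $\sigma,\sigma'\in\Psi_d$, $P(\sigma)$ and $\sigma\le\sigma'$ imply $P(\sigma')$. A constraint-producing predicate is a family of relations $\mathcal A\models^d\sigma$ between sets $\mathcal A$ of literals of domain $d$ and $\sigma\in\Psi_d$. A constraint-refining predicate is a family of relations $R^d(\sigma,\mathcal A,\sigma')$ between sets $\mathcal A$ of literals of domain $d$ and pairs $\sigma,\sigma'\in\Psi_d$. It relates to $(\models^d)_d$ if for all $d$, all sets $\mathcal A$ of literals of domain $d$ and all $\sigma\in\Psi_d$: (A1) for all $\sigma'\in\Psi_d$, $R^d(\sigma,\mathcal A,\sigma')$ implies there is $\sigma''\in\Psi_d$ with $\sigma'\simeq\sigma\wedge\sigma''$, $P(\sigma\wedge\sigma'')$ and $\mathcal A\models^d\sigma''$; (A2) for all $\sigma'\in\Psi_d$, if $P(\sigma\wedge\sigma')$ and $\mathcal A\models^d\sigma'$ then there is $\sigma''\in\Psi_d$ with $\sigma''\simeq\sigma\wedge\sigma'$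 and $R^d(\sigma,\mathcal A,\sigma'')$. System DI derives $\vdash^d\Gamma\to\sigma$ ($\Gamma$, $\sigma$ of domain $d$) by: $\vdash^d\Gamma\to\sigma$ if $\Gamma_{lit}\models^d\sigma$; from $\vdash^d\Gamma,A\to\sigma$ and $\vdash^d\Gamma,B\to\sigma'$ infer $\vdash^d\Gamma,A\wedge B\to\sigma\wedge\sigma'$; from $\vdash^d\Gamma,A,B\to\sigma$ infer $\vdash^d\Gamma,A\vee B\to\sigma$; from $\vdash^{d;X}\Gamma,A[x:=X],\exists xA\to\sigma$ ($X$ fresh meta-variable) infer $\vdash^d\Gamma,\exists xA\to\sigma_\downarrow$; from $\vdash^{d;\bar x}\Gamma,A[x:=\bar x]\to\sigma$ ($\bar x$ fresh eigenvariable) infer $\vdash^d\Gamma,\forall xA\to\sigma$. System SDI derives $\sigma\to\vdash^d\Gamma\to\sigma'$ ($\Gamma,\sigma,\sigma'$ of domain $d$) by: $\sigma\to\vdash^d\Gamma\to\sigma'$ if $R^d(\sigma,\Gamma_{lit},\sigma')$; from $\sigma\to\vdash^d\Gamma,A,B\to\sigma'$ infer $\sigma\to\vdash^d\Gamma,A\vee B\to\sigma'$; for $i\in\{0,1\}$, from $\sigma\to\vdash^d\Gamma,A_i\to\sigma''$ and $\sigma''\to\vdash^d\Gamma,A_{1-i}\to\sigma'$ infer $\sigma\to\vdash^d\Gamma,A_0\wedge A_1\to\sigma'$; from $\sigma^\uparrow\to\vdash^{d;X}\Gamma,A[x:=X],\exists xA\to\sigma'$ ($X$ fresh meta-variable)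 infer $\sigma\to\vdash^d\Gamma,\exists xA\to\sigma'_\downarrow$; from $\sigma\to\vdash^{d;\bar x}\Gamma,A[x:=\bar x]\to\sigma'$ ($\bar x$ fresh eigenvariable) infer $\sigma\to\vdash^d\Gamma,\forall xA\to\sigma'$. *)

(* Defs.v *)
From Stdlib Require Import List Arith Permutation.
Import ListNotations.

Inductive var : Type :=
| VBound (x : nat)
| VEig (n : nat)
| VMeta (n : nat).

Inductive term : Type :=
| TVar (v : var)
| TFun (f : nat) (args : list term).

Inductive literal : Type :=
| LPos (p : nat) (args : list term)
| LNeg (p : nat) (args : list term).

(* formulas in negation normal form *)
Inductive formula : Type :=
| FLit (l : literal)
| FAnd (A B : formula)
| FOr (A B : formula)
| FAll (x : nat) (A : formula)
| FEx (x : nat) (A : formula).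

(* substitution of a term for the bound variable x; it is only used with
   t an eigenvariable or meta-variable, so no capture can occur *)
Fixpoint subst_term (x : nat) (t : term) (u : term) : term :=
  match u with
  | TVar (VBound y) => if Nat.eqb x y then t else u
  | TVar _ => u
  | TFun f args => TFun f (map (subst_term x t) args)
  end.

Definition subst_lit (x : nat) (t : term) (l : literal) : literal :=
  match l with
  | LPos p args => LPos p (map (subst_term x t) args)
  | LNeg p args => LNeg p (map (subst_term x t) args)
  end.

Fixpoint subst (x : nat) (t : term) (A : formula) : formula :=
  match A with
  | FLit l => FLit (subst_lit x t l)
  | FAnd B C => FAnd (subst x t B) (subst x t C)
  | FOr B C => FOr (subst x t B) (subst x t C)
  | FAll y B => if Nat.eqb x y then A else FAll y (subst x t B)
  | FEx y B => if Nat.eqb x y then A else FEx y (subst x t B)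
  end.

Fixpoint fv_term (u : term) : list var :=
  match u with
  | TVar v => [v]
  | TFun _ args => flat_map fv_term args
  end.

Definition fv_lit (l : literal) : list var :=
  match l with
  | LPos _ args => flat_map fv_term args
  | LNeg _ args => flat_map fv_term args
  end.

Definition not_bound (x : nat) (v : var) : bool :=
  match v with VBound y => negb (Nat.eqb x y) | _ => true end.

Fixpoint fv (A : formula) : list var :=
  match A with
  | FLit l => fv_lit l
  | FAnd B C => fv B ++ fv C
  | FOr B C => fv B ++ fv C
  | FAll x B => filter (not_bound x) (fv B)
  | FEx x B => filter (not_bound x) (fv B)
  end.

Inductive decl : Type :=
| DEig (n : nat)
| DMeta (n : nat).

(* d;v is represented as (v :: d); the initial domain d0 is [] *)
Definition domain := list decl.

Inductive wf_dom : domain -> Prop :=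
| wf_nil : wf_dom []
| wf_cons (d : domain) (v : decl) : wf_dom d -> ~ In v d -> wf_dom (v :: d).

Definition declared (d : domain) (v : var) : Prop :=
  match v with
  | VBound _ => False
  | VEig n => In (DEig n) d
  | VMeta n => In (DMeta n) d
  end.

Definition formula_of_dom (d : domain) (A : formula) : Prop :=
  forall v, In v (fv A) -> declared d v.

Definition lit_of_dom (d : domain) (l : literal) : Prop :=
  forall v, In v (fv_lit l) -> declared d v.

Definition ctx_of_dom (d : domain) (G : list formula) : Prop :=
  forall A, In A G -> formula_of_dom d A.

Definition litset := literal -> Prop.

Definition litset_of_dom (d : domain) (S : litset) : Prop :=
  forall l, S l -> lit_of_dom d l.

Definition lits (G : list formula) : litset := fun l => In (FLit l) G.

(* Psi_{d;\bar x} = Psi_d is built in: the family is given on "constraint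
   indices" and Psi_d := Psi (cdom d), where cdom drops the trailing
   eigenvariable declarations. Every family satisfying Psi_{d;\bar x} = Psi_d
   is of this form. *)
Fixpoint cdom (d : domain) : domain :=
  match d with
  | [] => []
  | DEig _ :: d' => cdom d'
  | DMeta n :: d' => DMeta n :: d'
  end.

Record mlcstruct : Type := {
  Psi : domain -> Type;
  proj : forall (d : domain) (X : nat), Psi (DMeta X :: d) -> Psi (cdom d);
  meet : forall (e : domain), Psi e -> Psi e -> Psi e;
  lift : forall (d : domain) (X : nat), Psi (cdom d) -> Psi (DMeta X :: d)
}.

Definition PsiD (C : mlcstruct) (d : domain) : Type := Psi C (cdom d).

Section Constraints.
Variable C : mlcstruct.
Variable le : forall e, Psi C e -> Psi C e -> Prop.
Variable P : forall e, Psi C e -> Prop.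

Definition ceqv (e : domain) (s s' : Psi C e) : Prop :=
  le e s s' /\ le e s' s.

Definition preorders : Prop :=
  forall d, wf_dom d ->
    (forall s : PsiD C d, le (cdom d) s s) /\
    (forall s1 s2 s3 : PsiD C d,
        le (cdom d) s1 s2 -> le (cdom d) s2 s3 -> le (cdom d) s1 s3).

Definition decent : Prop :=
  preorders /\
  (forall d, wf_dom d -> forall s s' : PsiD C d,
      le _ (meet C _ s s') s /\ le _ (meet C _ s s') s' /\
      (forall t : PsiD C d, le _ t s -> le _ t s' -> le _ t (meet C _ s s'))) /\
  (forall d X, wf_dom (DMeta X :: d) ->
     forall (s : PsiD C d) (s' s'' : Psi C (DMeta X :: d)),
       ceqv _ s'' (meet C _ (lift C d X s) s') ->
       ceqv _ (proj C d X s'') (meet C _ s (proj C d X s'))) /\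
  (forall d X, wf_dom (DMeta X :: d) ->
     forall s : Psi C (DMeta X :: d), P _ s <-> P _ (proj C d X s)) /\
  (forall d, wf_dom d -> forall s s' : PsiD C d,
      P _ s -> le _ s s' -> P _ s').

Variable R : forall d : domain, PsiD C d -> litset -> PsiD C d -> Prop.
Variable models : forall d : domain, litset -> PsiD C d -> Prop.

Definition relates : Prop :=
  forall d, wf_dom d -> forall (A : litset), litset_of_dom d A ->
  forall s : PsiD C d,
    (forall s' : PsiD C d, R d s A s' ->
       exists s'' : PsiD C d,
         ceqv _ s' (meet C _ s s'') /\ P _ (meet C _ s s'') /\ models d A s'') /\
    (forall s' : PsiD C d, P _ (meet C _ s s') -> models d A s' ->
       exists s'' : PsiD C d, ceqv _ s'' (meet C _ s s') /\ R d s A s'').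

(* contexts are multisets: the principal formula is matched up to permutation *)
Inductive DI : forall d : domain, list formula -> PsiD C d -> Prop :=
| DI_ax (d : domain) (G : list formula) (s : PsiD C d) :
    models d (lits G) s -> DI d G s
| DI_and (d : domain) (D G : list formula) (A B : formula) (s s' : PsiD C d) :
    Permutation D (FAnd A B :: G) ->
    DI d (A :: G) s -> DI d (B :: G) s' -> DI d D (meet C _ s s')
| DI_or (d : domain) (D G : list formula) (A B : formula) (s : PsiD C d) :
    Permutation D (FOr A B :: G) ->
    DI d (A :: B :: G) s -> DI d D s
| DI_ex (d : domain) (D G : list formula) (x X : nat) (A : formula)
        (s : Psi C (DMeta X :: d)) :
    Permutation D (FEx x A :: G) -> ~ In (DMeta X) d ->
    DI (DMeta X :: d) (subst x (TVar (VMeta X)) A :: FEx x A :: G) s ->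
    DI d D (proj C d X s)
| DI_all (d : domain) (D G : list formula) (x n : nat) (A : formula)
        (s : PsiD C d) :
    Permutation D (FAll x A :: G) -> ~ In (DEig n) d ->
    DI (DEig n :: d) (subst x (TVar (VEig n)) A :: G) s ->
    DI d D s.

Inductive SDI : forall d : domain, PsiD C d -> list formula -> PsiD C d -> Prop :=
| SDI_ax (d : domain) (s : PsiD C d) (G : list formula) (s' : PsiD C d) :
    R d s (lits G) s' -> SDI d s G s'
| SDI_or (d : domain) (s : PsiD C d) (D G : list formula) (A B : formula)
         (s' : PsiD C d) :
    Permutation D (FOr A B :: G) ->
    SDI d s (A :: B :: G) s' -> SDI d s D s'
| SDI_and0 (d : domain) (s : PsiD C d) (D G : list formula) (A0 A1 : formula)
         (s'' s' : PsiD C d) :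
    Permutation D (FAnd A0 A1 :: G) ->
    SDI d s (A0 :: G) s'' -> SDI d s'' (A1 :: G) s' -> SDI d s D s'
| SDI_and1 (d : domain) (s : PsiD C d) (D G : list formula) (A0 A1 : formula)
         (s'' s' : PsiD C d) :
    Permutation D (FAnd A0 A1 :: G) ->
    SDI d s (A1 :: G) s'' -> SDI d s'' (A0 :: G) s' -> SDI d s D s'
| SDI_ex (d : domain) (s : PsiD C d) (D G : list formula) (x X : nat)
         (A : formula) (s' : Psi C (DMeta X :: d)) :
    Permutation D (FEx x A :: G) -> ~ In (DMeta X) d ->
    SDI (DMeta X :: d) (lift C d X s)
        (subst x (TVar (VMeta X)) A :: FEx x A :: G) s' ->
    SDI d s D (proj C d X s')
| SDI_all (d : domain) (s : PsiD C d) (D G : list formula) (x n : nat)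
          (A : formula) (s' : PsiD C d) :
    Permutation D (FAll x A :: G) -> ~ In (DEig n) d ->
    SDI (DEig n :: d) s (subst x (TVar (VEig n)) A :: G) s' ->
    SDI d s D s'.

End Constraints.

(* Main.v *)
Require Import Defs.
From Stdlib Require Import List Arith Permutation.

Section Aux.

Fixpoint term_rect' (Q : term -> Prop)
  (HV : forall v, Q (TVar v))
  (HF : forall f args, Forall Q args -> Q (TFun f args)) (u : term) : Q u :=
  match u with
  | TVar v => HV v
  | TFun f args => HF f args
      ((fix go (l : list term) : Forall Q l :=
          match l with
          | nil => Forall_nil _
          | a :: l' => Forall_cons _ (term_rect' Q HV HF a) (go l')
          end) args)
  end.

Definition goodv (x : nat) (w v : var) (L : list var) : Prop :=
  v = w \/ (In v L /\ not_bound x v = true).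

Lemma subst_term_fv x w : forall u v,
  In v (fv_term (subst_term x (TVar w) u)) -> goodv x w v (fv_term u).
Proof.
  apply (term_rect' (fun u => forall v,
    In v (fv_term (subst_term x (TVar w) u)) -> goodv x w v (fv_term u))).
  - intros v0 v H. destruct v0 as [y|n|n]; simpl in *.
    + destruct (Nat.eqb x y) eqn:E; simpl in H.
      * destruct H as [H|[]]. left; auto.
      * destruct H as [H|[]]. subst. right. split; [simpl; auto|]. simpl. rewrite E; auto.
    + destruct H as [H|[]]. subst. right; simpl; auto.
    + destruct H as [H|[]]. subst. right; simpl; auto.
  - intros f args HF v H. simpl in *.
    induction HF as [|a l Ha Hl IH]; simpl in *; [contradiction|].
    apply in_app_or in H. destruct H as [H|H].
    + destruct (Ha v H) as [E|[E1 E2]]; [left; auto|right; split; auto; apply in_or_app; auto].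
    + destruct (IH H) as [E|[E1 E2]]; [left; auto|right; split; auto; apply in_or_app; auto].
Qed.

Lemma flat_lem x w args v :
  In v (flat_map fv_term (map (subst_term x (TVar w)) args)) ->
  goodv x w v (flat_map fv_term args).
Proof.
  intro H. pose proof (subst_term_fv x w (TFun 0 args) v) as K. simpl in K. auto.
Qed.

Lemma subst_fv x w : forall A v,
  In v (fv (subst x (TVar w) A)) -> goodv x w v (fv A).
Proof.
  induction A as [l|A IHA B IHB|A IHA B IHB|y A IH|y A IH]; intros v H; simpl in *.
  - destruct l; simpl in *; apply flat_lem; auto.
  - apply in_app_or in H. destruct H as [H|H].
    + destruct (IHA v H) as [E|[E1 E2]]; [left; auto|right; split; auto; apply in_or_app; auto].
    + destruct (IHB v H) as [E|[E1 E2]]; [left; auto|right; split; auto; apply in_or_app; auto].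
  - apply in_app_or in H. destruct H as [H|H].
    + destruct (IHA v H) as [E|[E1 E2]]; [left; auto|right; split; auto; apply in_or_app; auto].
    + destruct (IHB v H) as [E|[E1 E2]]; [left; auto|right; split; auto; apply in_or_app; auto].
  - destruct (Nat.eqb x y) eqn:E.
    + right. split; auto. apply Nat.eqb_eq in E; subst. simpl in H.
      apply filter_In in H. tauto.
    + simpl in H. apply filter_In in H. destruct H as [H1 H2].
      destruct (IH v H1) as [E'|[E1 E2]]; [left; auto|right; split; auto; apply filter_In; auto].
  - destruct (Nat.eqb x y) eqn:E.
    + right. split; auto. apply Nat.eqb_eq in E; subst. simpl in H.
      apply filter_In in H. tauto.
    + simpl in H. apply filter_In in H. destruct H as [H1 H2].
      destruct (IH v H1) as [E'|[E1 E2]]; [left; auto|right; split; auto; apply filter_In; auto].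
Qed.

Lemma declared_mono d a v : declared d v -> declared (a :: d) v.
Proof. destruct v; simpl; auto. Qed.

Lemma fod_mono d a A : formula_of_dom d A -> formula_of_dom (a :: d) A.
Proof. unfold formula_of_dom; intros H v Hv; apply declared_mono; auto. Qed.

Lemma ctx_mono d a G : ctx_of_dom d G -> ctx_of_dom (a :: d) G.
Proof. unfold ctx_of_dom; intros H A HA; apply fod_mono; auto. Qed.

Lemma subst_dom d a x w A :
  declared (a :: d) w ->
  (forall v, In v (filter (not_bound x) (fv A)) -> declared d v) ->
  formula_of_dom (a :: d) (subst x (TVar w) A).
Proof.
  intros Hw H v Hv. destruct (subst_fv x w A v Hv) as [E|[E1 E2]].
  - subst; auto.
  - apply declared_mono, H, filter_In; auto.
Qed.

Lemma ctx_perm d D G : Permutation D G -> ctx_of_dom d D -> ctx_of_dom d G.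
Proof.
  intros HP H A HA. apply H. apply Permutation_in with G; auto. symmetry; auto.
Qed.

End Aux.

Theorem mainTheorem6
  (C : mlcstruct)
  (le : forall e, Psi C e -> Psi C e -> Prop)
  (P : forall e, Psi C e -> Prop)
  (R : forall d : domain, PsiD C d -> litset -> PsiD C d -> Prop)
  (models : forall d : domain, litset -> PsiD C d -> Prop) :
  decent C le P ->
  relates C le P R models ->
  forall (d : domain) (G : list formula) (s' : PsiD C d),
    wf_dom d -> ctx_of_dom d G ->
    DI C models d G s' ->
    forall s : PsiD C d,
      P (cdom d) (meet C _ s s') ->
      exists s'' : PsiD C d,
        ceqv C le (cdom d) s'' (meet C _ s s') /\ SDI C R d s G s''.
Proof.
  intros [Hpre [HD1 [HD2 [HP1 HP2]]]] Hrel d G s' Hwf Hctx HDI.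
  revert Hwf Hctx. induction HDI; intros Hwf Hctx s0 HP.
  -
    assert (Hl : litset_of_dom d (lits G)).
    { intros l Hl v Hv. apply (Hctx (FLit l) Hl). simpl. auto. }
    destruct (Hrel d Hwf (lits G) Hl s0) as [_ A2].
    destruct (A2 s HP H) as [t [Ht HR]].
    exists t. split; auto. constructor; auto.
  -
    pose proof (ctx_perm _ _ _ H Hctx) as Hc.
    assert (HcA : ctx_of_dom d (A :: G)).
    { intros F [HF|HF]; [subst|apply Hc; simpl; auto].
      intros v Hv. apply (Hc (FAnd F B)); simpl; auto. apply in_or_app; auto. }
    assert (HcB : ctx_of_dom d (B :: G)).
    { intros F [HF|HF]; [subst|apply Hc; simpl; auto].
      intros v Hv. apply (Hc (FAnd A F)); simpl; auto. apply in_or_app; auto. }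
    destruct (Hpre d Hwf) as [Hrefl Htr].
    destruct (HD1 d Hwf s s') as [m1 [m2 m3]].
    destruct (HD1 d Hwf s0 (meet C _ s s')) as [n1 [n2 n3]].
    assert (Le1 : le _ (meet C _ s0 (meet C _ s s')) (meet C _ s0 s)).
    { destruct (HD1 d Hwf s0 s) as [_ [_ k3]]. apply k3; eauto. }
    destruct (IHHDI1 Hwf HcA s0 (HP2 d Hwf _ _ HP Le1)) as [t1 [[Ht1a Ht1b] HS1]].
    assert (Le2 : le _ (meet C _ s0 (meet C _ s s')) (meet C _ t1 s')).
    { destruct (HD1 d Hwf t1 s') as [_ [_ k3]]. apply k3; eauto. }
    destruct (IHHDI2 Hwf HcB t1 (HP2 d Hwf _ _ HP Le2)) as [t2 [[Ht2a Ht2b] HS2]].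
    exists t2. split.
    + destruct (HD1 d Hwf t1 s') as [k1 [k2 k3]].
      destruct (HD1 d Hwf s0 s) as [j1 [j2 j3]].
      split.
      * apply n3.
        -- eapply Htr; [exact Ht2a|]. eapply Htr; [exact k1|]. eapply Htr; eauto.
        -- apply m3.
           ++ eapply Htr; [exact Ht2a|]. eapply Htr; [exact k1|]. eapply Htr; eauto.
           ++ eapply Htr; eauto.
      * eapply Htr; [exact Le2|exact Ht2b].
    + eapply SDI_and0; eauto.
  -
    pose proof (ctx_perm _ _ _ H Hctx) as Hc.
    assert (HcA : ctx_of_dom d (A :: B :: G)).
    { intros F [HF|[HF|HF]]; [subst..|apply Hc; simpl; auto].
      - intros v Hv. apply (Hc (FOr F B)); simpl; auto. apply in_or_app; auto.
      - intros v Hv. apply (Hc (FOr A F)); simpl; auto. apply in_or_app; auto. }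
    destruct (IHHDI Hwf HcA s0 HP) as [t [Ht HS]].
    exists t. split; auto. eapply SDI_or; eauto.
  -
    pose proof (ctx_perm _ _ _ H Hctx) as Hc.
    assert (Hwf' : wf_dom (DMeta X :: d)) by (constructor; auto).
    assert (Hc' : ctx_of_dom (DMeta X :: d)
                   (subst x (TVar (VMeta X)) A :: FEx x A :: G)).
    { intros F [HF|HF].
      - subst. apply subst_dom. simpl; auto.
        intros v Hv. apply (Hc (FEx x A)); simpl; auto.
      - apply fod_mono. apply Hc. simpl. auto. }
    destruct (Hpre _ Hwf') as [Hrefl' _].
    destruct (Hpre d Hwf) as [Hrefl Htr].
    assert (E0 := HD2 d X Hwf' s0 s (meet C _ (lift C d X s0) s)
                  (conj (Hrefl' _) (Hrefl' _))).
    destruct E0 as [E1 E2].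
    assert (HPl : P _ (meet C _ (lift C d X s0) s)).
    { apply (HP1 d X Hwf'). eapply HP2; eauto. }
    destruct (IHHDI Hwf' Hc' (lift C d X s0) HPl) as [t [Ht HS]].
    exists (proj C d X t). split.
    + apply (HD2 d X Hwf' s0 s t Ht).
    + eapply SDI_ex; eauto.
  -
    pose proof (ctx_perm _ _ _ H Hctx) as Hc.
    assert (Hwf' : wf_dom (DEig n :: d)) by (constructor; auto).
    assert (Hc' : ctx_of_dom (DEig n :: d) (subst x (TVar (VEig n)) A :: G)).
    { intros F [HF|HF].
      - subst. apply subst_dom. simpl; auto.
        intros v Hv. apply (Hc (FAll x A)); simpl; auto.
      - apply fod_mono. apply Hc. simpl. auto. }
    destruct (IHHDI Hwf' Hc' s0 HP) as [t [Ht HS]].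
    exists t. split; auto. eapply SDI_all; eauto.
Qed.
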